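(* Let $L>0$, $K>0$ and let $p\in C^{0,1}([0,L],\mathbb{R}^d)$ be the arc length parametrisation of an (open) polygon with vertices $p(a_0),\dots,p(a_n)$, $0=a_0<a_1<\dots<a_n=L$, such that $\mathrm{maxCurv}_2(p)\le K$ and $KL\le\pi$. Let $\eta:[0,L]\to\mathbb{R}^d$ be the arc length parametrisation of (an arc of) a circle of curvature $K$. Then $$|\eta(L)-\eta(0)|<|p(L)-p(0)|.$$
   Context: For an open polygon $p$ with vertices $y_k=p(a_k)$, the discrete curvature at an interior vertex $y_k$ ($1\le k\le n-1$) is $\kappa_{d,2}(y_{k-1},y_k,y_{k+1})=\frac{\phi_k}{(|y_{k-1}-y_k|+|y_{k+1}-y_k|)/2}$, where $\phi_k=\measuredangle(y_k-y_{k-1},y_{k+1}-y_k)\in[0,\pi]$ is the exterior angle at $y_k$; $\mathrm{maxCurv}_2(p)$ is the maximum of $\kappa_{d,2}$ over all interior vertices (and $0$ if there are none). *)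

(* Defs.v *)
(* Stdlib Reals. Points of R^d are represented as functions nat -> R,
   only coordinates 0..d-1 being relevant. *)
From Stdlib Require Import Reals Lra Lia.
Open Scope R_scope.

Definition vec := nat -> R.

Fixpoint sumd (d : nat) (f : nat -> R) : R :=
  match d with O => 0 | S d' => sumd d' f + f d' end.

Definition dot (d : nat) (u v : vec) : R := sumd d (fun i => u i * v i).
Definition norm (d : nat) (u : vec) : R := sqrt (dot d u u).
Definition vsub (u v : vec) : vec := fun i => u i - v i.

Definition angle (d : nat) (u v : vec) : R :=
  acos (dot d u v / (norm d u * norm d v)).

Definition kappa_d2 (d : nat) (x y z : vec) : R :=
  angle d (vsub y x) (vsub z y) / ((norm d (vsub x y) + norm d (vsub z y)) / 2).

Fixpoint maxCurv_aux (d : nat) (y : nat -> vec) (m : nat) : R :=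
  match m with
  | O => 0
  | S m' => Rmax (maxCurv_aux d y m') (kappa_d2 d (y m') (y (S m')) (y (S (S m'))))
  end.

(* maxCurv_2 of the polygon with vertices y_0, ..., y_n : max over interior
   vertices 1 <= k <= n-1, and 0 if there are none *)
Definition maxCurv2 (d n : nat) (y : nat -> vec) : R := maxCurv_aux d y (n - 1).

Definition is_arclength_polygon (d n : nat) (a : nat -> R) (L : R) (p : R -> vec) : Prop :=
  a O = 0 /\ a n = L /\
  (forall k, (k < n)%nat -> a k < a (S k)) /\
  (forall k, (k < n)%nat ->
     norm d (vsub (p (a (S k))) (p (a k))) = a (S k) - a k) /\
  (forall k t i, (k < n)%nat -> a k <= t <= a (S k) -> (i < d)%nat ->
     p t i = p (a k) i + (t - a k) / (a (S k) - a k) * (p (a (S k)) i - p (a k) i)).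

Definition is_arclength_circle_arc (d : nat) (K L : R) (eta : R -> vec) : Prop :=
  exists (c e1 e2 : vec) (th0 : R),
    dot d e1 e1 = 1 /\ dot d e2 e2 = 1 /\ dot d e1 e2 = 0 /\
    (forall t i, 0 <= t <= L -> (i < d)%nat ->
       eta t i = c i + (cos (th0 + K * t) * e1 i + sin (th0 + K * t) * e2 i) / K).

(* Main.v *)
Require Import Defs.
From Stdlib Require Import Reals Lra Lia Psatz.
Open Scope R_scope.

Lemma sumd_ext d f g : (forall i, (i < d)%nat -> f i = g i) -> sumd d f = sumd d g.
Proof. induction d; simpl; intros H; [reflexivity|]. rewrite IHd by (intros; apply H; lia). rewrite H by lia. reflexivity. Qed.

Lemma sumd_plus d f g : sumd d (fun i => f i + g i) = sumd d f + sumd d g.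
Proof. induction d; simpl; [lra|]. rewrite IHd; lra. Qed.

Lemma sumd_scal d c f : sumd d (fun i => c * f i) = c * sumd d f.
Proof. induction d; simpl; [lra|]. rewrite IHd; lra. Qed.

Lemma sumd_nonneg d f : (forall i, (i < d)%nat -> 0 <= f i) -> 0 <= sumd d f.
Proof. induction d; simpl; intros H; [lra|]. assert (0 <= f d) by (apply H; lia).
 assert (0 <= sumd d f) by (apply IHd; intros; apply H; lia). lra. Qed.

Lemma sumd_lt n f g : (0 < n)%nat -> (forall k, (k < n)%nat -> f k < g k) -> sumd n f < sumd n g.
Proof. induction n; simpl; intros Hn H; [lia|]. assert (f n < g n) by (apply H; lia).
 destruct n. simpl. lra.
 assert (sumd (S n) f < sumd (S n) g) by (apply IHn; [lia| intros; apply H; lia]). lra. Qed.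

Lemma sumd_swap d n (f : nat -> nat -> R) :
  sumd d (fun i => sumd n (fun k => f k i)) = sumd n (fun k => sumd d (fun i => f k i)).
Proof. induction n; simpl.
 - clear. induction d; simpl; lra.
 - rewrite sumd_plus, IHn. reflexivity. Qed.

Lemma sumd_tele n (g : nat -> R) : sumd n (fun k => g (S k) - g k) = g n - g O.
Proof. induction n; simpl; [lra|]. rewrite IHn; lra. Qed.

Lemma dot_comm d u v : dot d u v = dot d v u.
Proof. unfold dot. apply sumd_ext. intros; lra. Qed.

Lemma dot_lin d al be u v w :
  dot d (fun i => al * u i + be * v i) w = al * dot d u w + be * dot d v w.
Proof. unfold dot. rewrite <- !sumd_scal, <- sumd_plus. apply sumd_ext; intros; lra. Qed.

Lemma dot_nonneg d u : 0 <= dot d u u.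
Proof. unfold dot. apply sumd_nonneg. intros; nra. Qed.

Lemma CS_sq d u v : (dot d u v)^2 <= dot d u u * dot d v v.
Proof. unfold dot. induction d; simpl. lra.
 set (S0 := sumd d (fun i => u i * v i)) in *.
 set (A := sumd d (fun i => u i * u i)) in *.
 set (B := sumd d (fun i => v i * v i)) in *.
 assert (HA : 0 <= A) by (apply sumd_nonneg; intros; nra).
 assert (HB : 0 <= B) by (apply sumd_nonneg; intros; nra).
 set (x := u d) ; set (y := v d).
 assert (H0: S0^2 * (x*y)^2 <= A*B*(x*y)^2) by (apply Rmult_le_compat_r; [nra| exact IHd]).
 assert (H1: (A*y*y + B*x*x)^2 >= 4 * (S0*x*y)^2) by (pose proof (pow2_ge_0 (A*y*y - B*x*x)); nra).
 assert (H2: 0 <= A*y*y + B*x*x) by nra.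
 assert (H3: 2 * S0*x*y <= A*y*y + B*x*x).
 { destruct (Rle_dec (2*S0*x*y) 0). lra. nra. }
 nra. Qed.

Lemma CS d u v : Rabs (dot d u v) <= norm d u * norm d v.
Proof. unfold norm. rewrite <- sqrt_mult by apply dot_nonneg.
 rewrite <- sqrt_Rsqr_abs. apply sqrt_le_1_alt. unfold Rsqr. pose proof (CS_sq d u v). simpl in H. lra. Qed.


Lemma dot_lin_r d al be u v w :
  dot d w (fun i => al * u i + be * v i) = al * dot d w u + be * dot d w v.
Proof. rewrite dot_comm, dot_lin, (dot_comm d u), (dot_comm d v). reflexivity. Qed.

Lemma dot_lin2 d al be ga de u v w z :
  dot d (fun i => al * u i + be * v i) (fun i => ga * w i + de * z i) =
  al*ga*dot d u w + al*de*dot d u z + be*ga*dot d v w + be*de*dot d v z.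
Proof. rewrite dot_lin, !dot_lin_r. ring. Qed.

Lemma Rabs_le_between a b : Rabs a <= b -> -b <= a <= b.
Proof. unfold Rabs. destruct (Rcase_abs a); lra. Qed.

Lemma unit_bound d u v : dot d u u = 1 -> dot d v v = 1 -> -1 <= dot d u v <= 1.
Proof. intros Hu Hv. pose proof (CS d u v) as H. unfold norm in H. rewrite Hu, Hv, sqrt_1 in H.
 apply Rabs_le_between in H. lra. Qed.

Lemma cos_mono x y : 0 <= x -> x <= y -> y <= PI -> cos y <= cos x.
Proof. intros. destruct (Req_dec x y). subst; lra. left; apply cos_decreasing_1; lra. Qed.

Lemma acos_le x b : -1 <= x <= 1 -> 0 <= b <= PI -> cos b <= x -> acos x <= b.
Proof. intros Hx Hb H. destruct (Rle_dec (acos x) b) as [|n]; auto. exfalso.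
 pose proof (acos_bound x). pose proof (cos_decreasing_1 b (acos x)) as C.
 rewrite cos_acos in C by lra. assert (x < cos b) by (apply C; lra). lra. Qed.

Lemma acos_cos_le x b : -1 <= x <= 1 -> b <= PI -> acos x <= b -> cos b <= x.
Proof. intros. pose proof (cos_acos x) as C. pose proof (acos_bound x).
 pose proof (cos_mono (acos x) b). rewrite C in *; lra. Qed.

Lemma tri d u v w a b : dot d u u = 1 -> dot d v v = 1 -> dot d w w = 1 ->
  cos a <= dot d u v -> cos b <= dot d v w -> 0 <= a -> 0 <= b -> a + b <= PI ->
  cos (a + b) <= dot d u w.
Proof. intros Hu Hv Hw Ha Hb a0 b0 ab.
 set (x := dot d u v) in *. set (y := dot d v w) in *.
 pose proof (unit_bound d u v Hu Hv) as Bx. pose proof (unit_bound d v w Hv Hw) as By.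
 fold x in Bx; fold y in By.
 set (u' := fun i => 1 * u i + (-x) * v i). set (w' := fun i => 1 * w i + (-y) * v i).
 assert (E1: dot d u' u' = 1 - x^2).
 { unfold u'. rewrite dot_lin2, Hu, Hv, (dot_comm d v u). fold x. ring. }
 assert (E2: dot d w' w' = 1 - y^2).
 { unfold w'. rewrite dot_lin2, Hw, Hv, (dot_comm d w v). fold y. ring. }
 assert (E3: dot d u' w' = dot d u w - x*y).
 { unfold u', w'. rewrite dot_lin2, Hv. fold x. fold y. ring. }
 pose proof (CS d u' w') as C. unfold norm in C. rewrite E1, E2 in C.
 apply Rabs_le_between in C. destruct C as [C _]. rewrite E3 in C.
 pose proof (sin_acos x Bx) as Sx. pose proof (sin_acos y By) as Sy.
 unfold Rsqr in Sx, Sy. replace (x^2) with (x*x) in C by ring. replace (y^2) with (y*y) in C by ring.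
 rewrite <- Sx, <- Sy in C.
 pose proof (cos_acos x Bx) as Cx. pose proof (cos_acos y By) as Cy.
 assert (cos (acos x + acos y) <= dot d u w).
 { rewrite cos_plus, Cx, Cy. lra. }
 assert (acos x <= a) by (apply acos_le; lra).
 assert (acos y <= b) by (apply acos_le; lra).
 pose proof (acos_bound x). pose proof (acos_bound y).
 pose proof (cos_mono (acos x + acos y) (a+b)). lra. Qed.


Lemma alg1 S C a b : S <> 0 -> S*S+C*C=1 -> a*a+b*b=1 ->
  (S*a - C*b)/S * ((S*a - C*b)/S) * 1 + (S*a - C*b)/S * (b/S) * C + b/S * ((S*a - C*b)/S) * C + b/S*(b/S)*1 = 1.
Proof. intros HS H1 H2.
 apply (Rmult_eq_reg_r (S*S)); [|nra].
 field_simplify; [|auto].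
 replace (C^2) with (1 - S^2) by nra. replace (b^2) with (1 - a^2) by nra. ring.
Qed.

Lemma geo d u v al be : dot d u u = 1 -> dot d v v = 1 -> 0 <= al -> 0 <= be -> al + be < PI ->
  cos (al + be) <= dot d u v ->
  exists e, dot d e e = 1 /\ cos al <= dot d e u /\ cos be <= dot d e v.
Proof. intros Hu Hv a0 b0 ab H.
 pose proof (unit_bound d u v Hu Hv) as Bx.
 set (x := dot d u v) in *.
 set (ph := acos x).
 assert (Hph : ph <= al + be) by (apply acos_le; lra).
 pose proof (acos_bound x) as Bph. fold ph in Bph.
 pose proof (cos_acos x Bx) as Cph. fold ph in Cph.
 destruct (Req_dec ph 0) as [E|NE].
 - exists u. rewrite E, cos_0 in Cph. split; [exact Hu|]. rewrite Hu. fold x.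
   pose proof (COS_bound al). pose proof (COS_bound be). lra.
 - assert (Sp : 0 < sin ph) by (apply sin_gt_0; lra).
   set (s := Rmin ph al).
   assert (s0 : 0 <= s) by (unfold s, Rmin; destruct Rle_dec; lra).
   assert (s1 : s <= al) by (unfold s, Rmin; destruct Rle_dec; lra).
   assert (s2 : ph - s <= be) by (unfold s, Rmin; destruct Rle_dec; lra).
   assert (s3 : s <= ph) by (unfold s, Rmin; destruct Rle_dec; lra).
   exists (fun i => (sin (ph - s) / sin ph) * u i + (sin s / sin ph) * v i).
   pose proof (sin2_cos2 s) as T1. pose proof (sin2_cos2 ph) as T2. unfold Rsqr in T1, T2.
   rewrite sin_minus. repeat split.
   + rewrite dot_lin2, Hu, Hv, (dot_comm d v u). fold x. rewrite <- Cph.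
     apply alg1; lra.
   + rewrite dot_lin, Hu, (dot_comm d v u). fold x. rewrite <- Cph.
     replace ((sin ph * cos s - cos ph * sin s) / sin ph * 1 + sin s / sin ph * cos ph) with (cos s) by (field; lra).
     apply cos_mono; lra.
   + rewrite dot_lin, Hv. fold x. rewrite <- Cph.
     replace ((sin ph * cos s - cos ph * sin s) / sin ph * cos ph + sin s / sin ph * 1) with (cos (ph - s)).
     * apply cos_mono; lra.
     * rewrite cos_minus. apply (Rmult_eq_reg_r (sin ph)); [|lra]. field_simplify; [|lra].
       replace (cos ph ^ 2) with (1 - sin ph ^2) by nra. ring.
Qed.


Lemma chain_up d (tau : nat -> vec) (m : nat -> R) K c n e j :
  0 < K ->
  (forall k, (k < n)%nat -> dot d (tau k) (tau k) = 1) -> dot d e e = 1 ->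
  (forall k, (S k < n)%nat -> cos (K*(m (S k) - m k)) <= dot d (tau k) (tau (S k))) ->
  (forall k, (S k < n)%nat -> m k <= m (S k)) ->
  (forall k, (k < n)%nat -> K*(m k - c) <= PI) ->
  c <= m j -> (j < n)%nat -> cos (K*(m j - c)) <= dot d (tau j) e ->
  forall k, (j <= k < n)%nat -> c <= m k /\ cos (K*(m k - c)) <= dot d (tau k) e.
Proof. intros HK Ht He Hc Hm Hpi cj jn Hj k. induction k as [|k IH]; intros Hk.
 - assert (j = O) by lia. subst. auto.
 - destruct (Nat.eq_dec j (S k)) as [E|NE]. { subst; auto. }
   destruct IH as [IH1 IH2]; [lia|].
   assert (m k <= m (S k)) by (apply Hm; lia).
   split; [lra|].
   replace (K * (m (S k) - c)) with (K*(m (S k) - m k) + K*(m k - c)) by ring.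
   apply tri with (v := tau k); auto.
   + apply Ht; lia.
   + apply Ht; lia.
   + rewrite dot_comm. apply Hc; lia.
   + nra.
   + nra.
   + replace (K*(m (S k) - m k) + K*(m k - c)) with (K * (m (S k) - c)) by ring. apply Hpi; lia.
Qed.

Lemma chain_down d (tau : nat -> vec) (m : nat -> R) K c n e j :
  0 < K ->
  (forall k, (k < n)%nat -> dot d (tau k) (tau k) = 1) -> dot d e e = 1 ->
  (forall k, (S k < n)%nat -> cos (K*(m (S k) - m k)) <= dot d (tau k) (tau (S k))) ->
  (forall k, (S k < n)%nat -> m k <= m (S k)) ->
  (forall k, (k < n)%nat -> K*(c - m k) <= PI) ->
  m j <= c -> (j < n)%nat -> cos (K*(c - m j)) <= dot d (tau j) e ->
  forall t k, (k + t = j)%nat -> m k <= c /\ cos (K*(c - m k)) <= dot d (tau k) e.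
Proof. intros HK Ht He Hc Hm Hpi cj jn Hj t. induction t as [|t IH]; intros k Hk.
 - replace k with j by lia. auto.
 - destruct (IH (S k)) as [IH1 IH2]; [lia|].
   assert (m k <= m (S k)) by (apply Hm; lia).
   split; [lra|].
   replace (K * (c - m k)) with (K*(m (S k) - m k) + K*(c - m (S k))) by ring.
   apply tri with (v := tau (S k)); auto.
   + apply Ht; lia.
   + apply Ht; lia.
   + apply Hc; lia.
   + nra.
   + nra.
   + replace (K*(m (S k) - m k) + K*(c - m (S k))) with (K * (c - m k)) by ring. apply Hpi; lia.
Qed.


Lemma dot_scal_l d c u w : dot d (fun i => c * u i) w = c * dot d u w.
Proof. unfold dot. rewrite <- sumd_scal. apply sumd_ext; intros; ring. Qed.
Lemma dot_scal_r d c u w : dot d w (fun i => c * u i) = c * dot d w u.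
Proof. rewrite dot_comm, dot_scal_l, dot_comm. reflexivity. Qed.

Lemma maxaux_ge d y M k : (k < M)%nat ->
  kappa_d2 d (y k) (y (S k)) (y (S (S k))) <= maxCurv_aux d y M.
Proof. induction M; intros H; [lia|]. simpl.
 destruct (Nat.eq_dec k M). subst. apply Rmax_r.
 eapply Rle_trans; [apply IHM; lia| apply Rmax_l]. Qed.

Lemma find_j (m : nat -> R) c : forall k, c <= m k ->
  exists j, (j <= k)%nat /\ c <= m j /\ (j = O \/ exists j', j = S j' /\ m j' <= c).
Proof. induction k; intros H. exists O; repeat split; auto; lia.
 destruct (Rle_dec c (m k)) as [h|h].
 - destruct (IHk h) as [j [? ?]]. exists j. split; [lia|auto].
 - exists (S k). repeat split; auto. right. exists k. split; auto; lra. Qed.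

Lemma sin_diff x h : sin (x + h) - sin (x - h) = 2 * sin h * cos x.
Proof. rewrite sin_plus, sin_minus. ring. Qed.


Lemma poly_main d n a (y : nat -> vec) K L :
  0 < L -> 0 < K -> K*L <= PI -> a O = 0 -> a n = L ->
  (forall k, (k < n)%nat -> a k < a (S k)) ->
  (forall k, (k < n)%nat -> norm d (vsub (y (S k)) (y k)) = a (S k) - a k) ->
  maxCurv2 d n y <= K ->
  2 * sin (K*L/2) / K < norm d (vsub (y n) (y O)).
Proof.
 intros HL HK HKL Ha0 Han Hinc Hlen Hcurv.
 assert (amono : forall t k, (k + t <= n)%nat -> a k <= a (k + t)%nat).
 { induction t; intros k H. rewrite Nat.add_0_r; lra.
   replace (k + S t)%nat with (S (k + t)) by lia.
   assert (a k <= a (k+t)%nat) by (apply IHt; lia). assert (a (k+t)%nat < a (S (k+t))) by (apply Hinc; lia). lra. }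
 assert (arange : forall k, (k <= n)%nat -> 0 <= a k <= L).
 { intros k H. split. rewrite <- Ha0. apply (amono k O); lia.
   rewrite <- Han. pose proof (amono (n - k)%nat k ltac:(lia)) as HH. replace (k + (n - k))%nat with n in HH by lia. exact HH. }
 assert (npos : (0 < n)%nat). { destruct n; [lra|lia]. }
 set (l := fun k => a (S k) - a k).
 set (m := fun k => (a k + a (S k)) / 2).
 set (u := fun k => vsub (y (S k)) (y k)).
 set (tau := fun k => fun i => / l k * u k i).
 assert (lpos : forall k, (k < n)%nat -> 0 < l k) by (intros k Hk; unfold l; pose proof (Hinc k Hk); lra).
 assert (Huu : forall k, (k < n)%nat -> dot d (u k) (u k) = l k * l k).
 { intros k Hk. pose proof (Hlen k Hk) as H. unfold norm in H. fold (u k) in H. fold (l k) in H.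
   rewrite <- H. rewrite sqrt_sqrt; [ring| apply dot_nonneg]. }
 assert (Htau : forall k, (k < n)%nat -> dot d (tau k) (tau k) = 1).
 { intros k Hk. unfold tau. rewrite dot_scal_l, dot_scal_r, Huu by auto. pose proof (lpos k Hk). field. lra. }
 assert (Hmrange : forall k, (k < n)%nat -> 0 < m k < L).
 { intros k Hk. unfold m. pose proof (Hinc k Hk). pose proof (arange k ltac:(lia)). pose proof (arange (S k) ltac:(lia)). lra. }
 assert (Hmm : forall k, (S k < n)%nat -> m k <= m (S k)).
 { intros k Hk. unfold m. pose proof (Hinc k ltac:(lia)). pose proof (Hinc (S k) Hk). lra. }
 assert (Hc : forall k, (S k < n)%nat -> cos (K*(m (S k) - m k)) <= dot d (tau k) (tau (S k))).
 { intros k Hk.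
   pose proof (maxaux_ge d y (n-1) k ltac:(lia)) as H1. unfold maxCurv2 in Hcurv.
   assert (H : kappa_d2 d (y k) (y (S k)) (y (S (S k))) <= K) by lra. clear H1.
   unfold kappa_d2, angle in H.
   assert (Hn1: norm d (vsub (y k) (y (S k))) = l k).
   { unfold l. rewrite <- (Hlen k) by lia. unfold norm, dot, vsub. f_equal. apply sumd_ext. intros; ring. }
   rewrite Hn1, (Hlen (S k) Hk), (Hlen k) in H by lia.
   fold (l k) (l (S k)) in H. fold (u k) (u (S k)) in H.
   assert (Ex : dot d (u k) (u (S k)) / (l k * l (S k)) = dot d (tau k) (tau (S k))).
   { unfold tau. rewrite dot_scal_l, dot_scal_r. pose proof (lpos k ltac:(lia)). pose proof (lpos (S k) Hk). field. lra. }
   rewrite Ex in H.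
   pose proof (unit_bound d (tau k) (tau (S k)) (Htau k ltac:(lia)) (Htau (S k) Hk)) as Bx.
   set (x := dot d (tau k) (tau (S k))) in *.
   pose proof (lpos k ltac:(lia)). pose proof (lpos (S k) Hk).
   assert (Hac : acos x <= K * ((l k + l (S k))/2)).
   { apply (Rmult_le_compat_r ((l k + l (S k))/2)) in H; [|lra].
     replace (acos x / ((l k + l (S k)) / 2) * ((l k + l (S k)) / 2)) with (acos x) in H by (field; lra). exact H. }
   assert (Em : m (S k) - m k = (l k + l (S k))/2) by (unfold m, l; field).
   rewrite Em. apply acos_cos_le; auto.
   pose proof (arange k ltac:(lia)). pose proof (arange (S (S k)) ltac:(lia)).
   assert (l k + l (S k) <= L) by (unfold l; lra). nra. }
 set (c := L/2).
 assert (He : exists e, dot d e e = 1 /\ forall k, (k < n)%nat -> cos (K*(m k - c)) <= dot d (tau k) e).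
 { assert (Hpi1 : forall k, (k < n)%nat -> K*(m k - c) <= PI).
   { intros k Hk. pose proof (Hmrange k Hk). unfold c. nra. }
   assert (Hpi2 : forall k, (k < n)%nat -> K*(c - m k) <= PI).
   { intros k Hk. pose proof (Hmrange k Hk). unfold c. nra. }
   destruct (Rle_dec (m (n-1)%nat) c) as [Hle|Hgt].
   - exists (tau (n-1)%nat). split. apply Htau; lia.
     intros k Hk.
     assert (H0 : cos (K*(c - m (n-1)%nat)) <= dot d (tau (n-1)%nat) (tau (n-1)%nat)).
     { rewrite Htau by lia. apply COS_bound. }
     destruct (chain_down d tau m K c n (tau (n-1)%nat) (n-1)%nat HK Htau (Htau (n-1)%nat ltac:(lia)) Hc Hmm Hpi2 Hle ltac:(lia) H0 (n-1-k)%nat k ltac:(lia)) as [_ H2].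
     rewrite <- cos_neg. replace (-(K*(m k - c))) with (K*(c - m k)) by ring. exact H2.
   - destruct (find_j m c (n-1)%nat ltac:(lra)) as [j [Hj1 [Hj2 Hj3]]].
     destruct Hj3 as [Hj0 | [j' [Ej Hj']]].
     + subst j. exists (tau O). split. apply Htau; lia.
       assert (H0 : cos (K*(m O - c)) <= dot d (tau O) (tau O)).
       { rewrite Htau by lia. apply COS_bound. }
       intros k Hk.
       destruct (chain_up d tau m K c n (tau O) O HK Htau (Htau O ltac:(lia)) Hc Hmm Hpi1 Hj2 ltac:(lia) H0 k ltac:(lia)) as [_ H2].
       exact H2.
     + subst j.
       assert (Hsum : K*(c - m j') + K*(m (S j') - c) < PI).
       { replace (K*(c - m j') + K*(m (S j') - c)) with (K*(m (S j') - m j')) by ring.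
         pose proof (Hmrange j' ltac:(lia)). pose proof (Hmrange (S j') ltac:(lia)).
         pose proof PI_RGT_0. unfold m in *.
         pose proof (arange j' ltac:(lia)). pose proof (arange (S (S j')) ltac:(lia)). nra. }
       assert (Hcj : cos (K*(c - m j') + K*(m (S j') - c)) <= dot d (tau j') (tau (S j'))).
       { replace (K*(c - m j') + K*(m (S j') - c)) with (K*(m (S j') - m j')) by ring. apply Hc; lia. }
       destruct (geo d (tau j') (tau (S j')) (K*(c - m j')) (K*(m (S j') - c))
                  (Htau j' ltac:(lia)) (Htau (S j') ltac:(lia)) ltac:(apply Rmult_le_pos; lra) ltac:(apply Rmult_le_pos; lra) Hsum Hcj)
         as [e [He1 [He2 He3]]].
       exists e. split; auto. intros k Hk.
       destruct (Compare_dec.le_lt_dec (S j') k) as [Hk'|Hk'].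
       * rewrite dot_comm in He3.
         destruct (chain_up d tau m K c n e (S j') HK Htau He1 Hc Hmm Hpi1 Hj2 ltac:(lia) He3 k ltac:(lia)) as [_ H2].
         exact H2.
       * rewrite dot_comm in He2.
         destruct (chain_down d tau m K c n e j' HK Htau He1 Hc Hmm Hpi2 Hj' ltac:(lia) He2 (j'-k)%nat k ltac:(lia)) as [_ H2].
         rewrite <- cos_neg. replace (-(K*(m k - c))) with (K*(c - m k)) by ring. exact H2. }
 destruct He as [e [He1 He2]].
 assert (HV : dot d (vsub (y n) (y O)) e = sumd n (fun k => l k * dot d (tau k) e)).
 { unfold dot at 1.
   transitivity (sumd d (fun i => sumd n (fun k => u k i * e i))).
   - apply sumd_ext. intros i Hi. unfold vsub.
     pose proof (sumd_tele n (fun k => y k i)) as T. cbv beta in T. rewrite <- T.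
     rewrite Rmult_comm, <- sumd_scal. apply sumd_ext; intros; unfold u, vsub; ring.
   - rewrite sumd_swap. apply sumd_ext. intros k Hk. unfold tau. rewrite dot_scal_l.
     change (sumd d (fun i => u k i * e i)) with (dot d (u k) e).
     pose proof (lpos k Hk). field. lra. }
 assert (HS : 2*sin(K*L/2)/K = sumd n (fun k => /K * (2*sin(K*(l k/2)) * cos(K*(m k - c))))).
 { transitivity (sumd n (fun k => /K * (sin(K*(a (S k) - c)) - sin(K*(a k - c))))).
   - rewrite sumd_scal. pose proof (sumd_tele n (fun k => sin (K*(a k - c)))) as T. cbv beta in T.
     rewrite T, Han, Ha0. unfold c. replace (K*(L - L/2)) with (K*L/2) by field.
     replace (K*(0 - L/2)) with (-(K*L/2)) by field. rewrite sin_neg. field. lra.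
   - apply sumd_ext. intros k Hk. f_equal. rewrite <- sin_diff. unfold m, l.
     f_equal; f_equal; field. }
 assert (Hlt : sumd n (fun k => /K * (2*sin(K*(l k/2)) * cos(K*(m k - c)))) < sumd n (fun k => l k * dot d (tau k) e)).
 { apply sumd_lt; auto. intros k Hk. specialize (He2 k Hk). pose proof (lpos k Hk).
   pose proof (Hmrange k Hk).
   assert (Hco : 0 < cos (K*(m k - c))).
   { apply cos_gt_0; unfold c; nra. }
   assert (Hs : sin (K*(l k/2)) < K*(l k/2)) by (apply sin_lt_x; nra).
   set (s0 := sin (K*(l k/2))) in *. set (co := cos (K*(m k - c))) in *.
   assert (2*s0*co < K*l k*co) by nra.
   assert (/K * (2*s0*co) < /K * (K * l k * co)) by (apply Rmult_lt_compat_l; [apply Rinv_0_lt_compat; lra| lra]).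
   replace (/K * (K * l k * co)) with (l k * co) in H2 by (field; lra).
   assert (l k * co <= l k * dot d (tau k) e) by (apply Rmult_le_compat_l; lra).
   lra. }
 pose proof (CS d (vsub (y n) (y O)) e) as C. unfold norm at 2 in C. rewrite He1, sqrt_1 in C.
 pose proof (Rle_abs (dot d (vsub (y n) (y O)) e)). lra.
Qed.


Lemma circle_chord d K L eta : 0 < L -> 0 < K -> K*L <= PI ->
  is_arclength_circle_arc d K L eta -> norm d (vsub (eta L) (eta 0)) = 2*sin(K*L/2)/K.
Proof. intros HL HK HKL [c0 [e1 [e2 [th0 [H1 [H2 [H3 Heta]]]]]]].
 set (A := th0 + K*L). set (B := th0 + K*0).
 set (w := fun i => (cos A - cos B)/K * e1 i + (sin A - sin B)/K * e2 i).
 assert (Ed : dot d (vsub (eta L) (eta 0)) (vsub (eta L) (eta 0)) = dot d w w).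
 { unfold dot. apply sumd_ext. intros i Hi. unfold vsub, w.
   rewrite (Heta L i), (Heta 0 i) by (auto; lra). fold A B. field. lra. }
 unfold norm. rewrite Ed. unfold w. rewrite dot_lin2, H1, H2, H3, (dot_comm d e2 e1), H3.
 assert (E2 : (cos A - cos B)^2 + (sin A - sin B)^2 = (2*sin(K*L/2))^2).
 { pose proof (sin2_cos2 A). pose proof (sin2_cos2 B). unfold Rsqr in *.
   assert (cos A * cos B + sin A * sin B = cos (K*L)).
   { rewrite <- cos_minus. f_equal. unfold A, B. ring. }
   assert (cos (K*L) = 1 - 2*sin(K*L/2)*sin(K*L/2)).
   { rewrite <- cos_2a_sin. f_equal. field. }
   nra. }
 replace ((cos A - cos B) / K * ((cos A - cos B) / K) * 1 + (cos A - cos B) / K * ((sin A - sin B) / K) * 0 +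
  (sin A - sin B) / K * ((cos A - cos B) / K) * 0 + (sin A - sin B) / K * ((sin A - sin B) / K) * 1)
  with ((2*sin(K*L/2)/K)^2).
 - apply sqrt_pow2. assert (0 <= sin (K*L/2)) by (apply sin_ge_0; pose proof PI_RGT_0; nra).
   apply Rmult_le_pos. lra. left. apply Rinv_0_lt_compat. lra.
 - replace ((2*sin(K*L/2)/K)^2) with ((2*sin(K*L/2))^2/(K*K)) by (field; lra). rewrite <- E2. field. lra.
Qed.

Theorem proposition6 (d n : nat) (L K : R) (a : nat -> R) (p eta : R -> vec) :
  0 < L -> 0 < K ->
  is_arclength_polygon d n a L p ->
  maxCurv2 d n (fun k => p (a k)) <= K ->
  K * L <= PI ->
  is_arclength_circle_arc d K L eta ->
  norm d (vsub (eta L) (eta 0)) < norm d (vsub (p L) (p 0)).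
Proof.
 intros HL HK [Ha0 [Han [Hinc [Hlen _]]]] Hcurv HKL Hcirc.
 rewrite (circle_chord d K L eta HL HK HKL Hcirc).
 pose proof (poly_main d n a (fun k => p (a k)) K L HL HK HKL Ha0 Han Hinc Hlen Hcurv) as H.
 cbv beta in H. rewrite Han, Ha0 in H. exact H.
Qed.
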